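(* Let $G_1$ and $G_2$ be two disjoint $(k+1)$-critical hypergraphs with $k\ge2$, let $\tilde e\in E(G_1)$, let $\tilde v$ be a low vertex of $G_2$, and let $s$ be any admissible map for $(\tilde e,G_2,\tilde v)$. Then $G=S(G_1,\tilde e,G_2,\tilde v,s)$ is $(k+1)$-critical, and $\partial_G(V(G_1))$ is a separating edge set of $G$ of size $k$.
   Context: A hypergraph is a pair $G=(V,E)$ of finite sets with $E\subseteq 2^V$ and $|e|\ge2$ for all $e\in E$. A coloring requires every edge to contain two vertices of different colors; $\chi$ is the chromatic number. $G$ is $(k+1)$-critical if $\chi(G)=k+1$ but $\chi(H)\le k$ for every proper subhypergraph $H$. In a $(k+1)$-critical hypergraph, a low vertex is one of degree exactly $k$ (degree = number of edges containing it). $\partial_G(X)$ is the set of edges meeting both $X$ and $V(G)\setminus X$; $\partial_G(v)=\partial_G(\{v\})$. A separating edge set is $F\subseteq E(G)$ such that $G-F$ has more components than $G$. Splitting: let $G_1,G_2$ be disjoint hypergraphs, $\tilde e\in E(G_1)$, $\tilde v\in V(G_2)$, and $s:\partial_{G_2}(\tilde v)\to 2^{\tilde e}$ a map (called admissible) with $s(e)\ne\varnothing$ for all $e$ and $\bigcup_{e}s(e)=\tilde e$. Then $S(G_1,\tilde e,G_2,\tilde v,s)$ is the hypergraph with vertex set $V(G_1)\cup(V(G_2)\setminus\{\tilde v\})$ and edge set $(E(G_1)\setminus\{\tilde e\})\cup(E(G_2)\setminus\partial_{G_2}(\tilde v))\cup\{(e\setminus\{\tilde v\})\cup s(e): e\in\partial_{G_2}(\tilde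 v)\}$. *)

(* Defs.v *)
From mathcomp Require Import all_boot.
Set Implicit Arguments. Unset Strict Implicit. Unset Printing Implicit Defensive.

Record hypergraph (T : finType) := Hypergraph { hV : {set T}; hE : {set {set T}} }.

Definition is_hypergraph (T : finType) (G : hypergraph T) : Prop :=
  forall e, e \in hE G -> e \subset hV G /\ 2 <= #|e|.

Definition colorable (T : finType) (G : hypergraph T) (m : nat) : Prop :=
  exists f : T -> nat, (forall x, x \in hV G -> f x < m) /\
    forall e, e \in hE G -> exists x y, [/\ x \in e, y \in e & f x != f y].

Definition chromatic_number (T : finType) (G : hypergraph T) (m : nat) : Prop :=
  colorable G m /\ forall j, colorable G j -> m <= j.

Definition subhypergraph (T : finType) (H G : hypergraph T) : Prop :=
  is_hypergraph H /\ hV H \subset hV G /\ hE H \subset hE G.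

Definition proper_subhypergraph (T : finType) (H G : hypergraph T) : Prop :=
  subhypergraph H G /\ H <> G.

Definition critical (T : finType) (G : hypergraph T) (k : nat) : Prop :=
  chromatic_number G k.+1 /\
  forall H, proper_subhypergraph H G -> exists j, chromatic_number H j /\ j <= k.

Definition degree (T : finType) (G : hypergraph T) (v : T) : nat :=
  #|[set e in hE G | v \in e]|.

Definition low_vertex (T : finType) (G : hypergraph T) (k : nat) (v : T) : Prop :=
  v \in hV G /\ degree G v = k.

Definition boundary (T : finType) (G : hypergraph T) (X : {set T}) : {set {set T}} :=
  [set e in hE G | (e :&: X != set0) && (e :&: (hV G :\: X) != set0)].

Definition hadj (T : finType) (G : hypergraph T) : rel T :=
  fun x y => [&& x \in hV G, y \in hV G & [exists e in hE G, (x \in e) && (y \in e)]].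

Definition components (T : finType) (G : hypergraph T) : {set {set T}} :=
  [set [set y in hV G | connect (hadj G) x y] | x in hV G].

Definition delete_edges (T : finType) (G : hypergraph T) (F : {set {set T}}) :=
  Hypergraph (hV G) (hE G :\: F).

Definition separating (T : finType) (G : hypergraph T) (F : {set {set T}}) : Prop :=
  F \subset hE G /\ #|components G| < #|components (delete_edges G F)|.

Definition admissible (T : finType) (et : {set T}) (G2 : hypergraph T) (v : T)
    (s : {set T} -> {set T}) : Prop :=
  (forall e, e \in boundary G2 [set v] -> s e \subset et /\ s e != set0) /\
  \bigcup_(e in boundary G2 [set v]) s e = et.

Definition split_hg (T : finType) (G1 : hypergraph T) (et : {set T})
    (G2 : hypergraph T) (v : T) (s : {set T} -> {set T}) : hypergraph T :=
  Hypergraph (hV G1 :|: (hV G2 :\ v))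
    ((hE G1 :\ et) :|: (hE G2 :\: boundary G2 [set v])
       :|: [set (e :\ v) :|: s e | e in boundary G2 [set v]]).

(* Main.v *)
Require Import Defs.
From mathcomp Require Import all_boot.
From Stdlib Require Import Classical Lia.
Set Implicit Arguments. Unset Strict Implicit. Unset Printing Implicit Defensive.

Lemma col_mono T (G : hypergraph T) m m' : colorable G m -> m <= m' -> colorable G m'.
Proof. move=> [f [Hf He]] le; exists f; split => // x /Hf H; exact: leq_trans H le. Qed.

Lemma col_sub T (G H : hypergraph T) m : hV H \subset hV G -> hE H \subset hE G ->
  colorable G m -> colorable H m.
Proof.
move=> sV sE [f [Hf He]]; exists f; split => [x /(subsetP sV)/Hf|e /(subsetP sE)/He] //.
Qed.

Lemma chi_exists T (G : hypergraph T) m : colorable G m ->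
  exists j, chromatic_number G j /\ j <= m.
Proof.
suff: forall n m, m <= n -> colorable G m -> exists j, chromatic_number G j /\ j <= m.
  by move=> H; apply: (H m).
elim=> [|n IH] m0 le col.
  exists m0; split => //; split => // j _; by move: le; rewrite leqn0 => /eqP->.
case: (classic (forall j, colorable G j -> m0 <= j)) => Hm.
  by exists m0.
have [j [cj ltj]] : exists j, colorable G j /\ j < m0.
  apply: NNPP => Hn; apply: Hm => j cj; rewrite leqNgt; apply/negP => lt; apply: Hn; by exists j.
have [j' [cj' lej']] := IH j (leq_trans ltj le) cj.
exists j'; split => //; exact: leq_trans lej' (ltnW ltj).
Qed.

Lemma crit_col T (G H : hypergraph T) k : critical G k -> proper_subhypergraph H G -> colorable H k.
Proof. move=> [_ Hc] /Hc [j [[cj _] le]]; exact: col_mono cj le. Qed.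

Lemma crit_notcol T (G : hypergraph T) k j : critical G k -> colorable G j -> k < j.
Proof. by move=> [[_ H] _] /H. Qed.

Definition del_edge T (G : hypergraph T) f := Hypergraph (hV G) (hE G :\ f).

Lemma del_edge_proper T (G : hypergraph T) f : is_hypergraph G -> f \in hE G ->
  proper_subhypergraph (del_edge G f) G.
Proof.
move=> hG fE; split; [split; [|split]|].
- move=> e; rewrite inE => /andP[_]; exact: hG.
- exact: subxx.
- exact: subsetDl.
- move=> eq; have : f \in hE (del_edge G f) by rewrite eq.
  by rewrite /= !inE eqxx.
Qed.

Lemma crit_nonisolated T (G : hypergraph T) k x : critical G k -> 0 < k -> is_hypergraph G ->
  x \in hV G -> exists2 e, e \in hE G & x \in e.
Proof.
move=> cG k0 hG xV.
case: (boolP [exists e in hE G, x \in e]) => [/existsP[e /andP[eE xe]]|ne]; first by exists e.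
exfalso.
have nx : forall e, e \in hE G -> x \notin e.
  move=> e eE; apply/negP => xe; move/existsP: ne; apply; exists e; by rewrite eE.
pose H := Hypergraph (hV G :\ x) (hE G).
have pH : proper_subhypergraph H G.
  split; [split; [|split]|].
  - move=> e eE; have [s2 c2] := hG e eE; split => //.
    apply/subsetP => y ye; rewrite !inE (subsetP s2 _ ye) andbT.
    by apply: contraNneq (nx e eE) => <-.
  - exact: subsetDl.
  - exact: subxx.
  - move=> eq; have : x \in hV H by rewrite eq.
    by rewrite !inE eqxx.
have [f [Hf He]] := crit_col cG pH.
have : colorable G k.
  exists (fun y => if y == x then 0 else f y); split.
  - move=> y yV; case: eqP => [//|/eqP ne']; apply: Hf; by rewrite !inE ne'.
  - move=> e eE; have [a [b [ae be ab]]] := He e eE; exists a, b; split => //.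
    have -> : (a == x) = false by apply/eqP => eq; move: (nx e eE); rewrite -eq ae.
    have -> : (b == x) = false by apply/eqP => eq; move: (nx e eE); rewrite -eq be.
    done.
move/(crit_notcol cG); by rewrite ltnn.
Qed.

Lemma add_color T (G : hypergraph T) f m : is_hypergraph G -> f \in hE G ->
  colorable (del_edge G f) m -> colorable G m.+1.
Proof.
move=> hG fE [g [Hg He]].
have [sf cf] := hG f fE.
have [x [y [xf yf xy]]] : exists x y, [/\ x \in f, y \in f & x != y] by apply/card_gt1P.
exists (fun z => if z == x then m else g z); split.
  move=> z zV; case: eqP => // _; apply: leqW; exact: Hg.
move=> e eE; case: (eqVneq e f) => [->|nef].
  exists x, y; split => //; rewrite eqxx (eq_sym y x) (negbTE xy) eq_sym.
  by rewrite neq_ltn Hg ?orbT // (subsetP sf).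
have [a [b [ae be ab]]] : exists a b, [/\ a \in e, b \in e & g a != g b].
  by apply: He; rewrite /= !inE nef.
have [se ce] := hG e eE.
exists a, b; split => //.
case: (eqVneq a x) => [ax|ax]; case: (eqVneq b x) => [bx|bx] //.
- by rewrite ax bx eqxx in ab.
- by rewrite eq_sym neq_ltn Hg //= (subsetP se).
- by rewrite neq_ltn Hg //= (subsetP se).
Qed.

Lemma hadj_sym T (G : hypergraph T) : symmetric (hadj G).
Proof.
move=> x y; rewrite /hadj andbCA; congr [&& _, _ & _].
by apply/existsP/existsP => [] [e /and3P[eE a b]]; exists e; rewrite eE a b.
Qed.

Definition comp T (G : hypergraph T) x := [set y in hV G | connect (hadj G) x y].

Lemma compE T (G : hypergraph T) x y : connect (hadj G) x y -> comp G x = comp G y.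
Proof.
move=> c; apply/setP => z; rewrite !inE; congr andb.
exact: (same_connect (sym_connect_sym (@hadj_sym T G)) c).
Qed.

Lemma sep_boundary T (G : hypergraph T) X : is_hypergraph G -> boundary G X != set0 ->
  separating G (boundary G X).
Proof.
move=> hG /set0Pn [f]; rewrite inE => /and3P[fE fX fY].
move/set0Pn: fY => [y]; move/set0Pn: fX => [x].
rewrite !inE => /andP[xf xX] /andP[yf /andP[yX yV]].
have [sf _] := hG f fE.
have xV : x \in hV G := subsetP sf x xf.
split; first by apply/subsetP => e; rewrite inE => /andP[].
set G' := delete_edges G (boundary G X).
have sub : subrel (hadj G') (hadj G).
  move=> a b /and3P[aV bV /existsP[e /and3P[eE ae be]]].
  apply/and3P; split => //; apply/existsP; exists e; rewrite ae be andbT.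
  by move: eE; rewrite /G' /= !inE andbT => /andP[].
have csub : subrel (connect (hadj G')) (connect (hadj G)).
  apply: connect_sub => a b /sub ab; exact: connect1.
pose g (C : {set T}) := \bigcup_(z in C) comp G z.
have gE : forall z, z \in hV G -> g (comp G' z) = comp G z.
  move=> z zV; apply/setP => w; apply/bigcupP/idP => [[u]|wz].
    rewrite inE => /andP[_ /csub/compE <-] //.
  by exists z => //; rewrite inE zV connect0.
have A : components G = g @: components G'.
  rewrite /components -imset_comp; apply: eq_in_imset => z zV /=; by rewrite gE.
have closedX : closed (hadj G') X.
  apply: intro_closed; first exact: sym_connect_sym (@hadj_sym T G').
  move=> a b /and3P[aV bV /existsP[e /and3P[eE ae be]]] aX.
  apply/negPn/negP => bX; have bV' : b \in hV G := bV.
  move: eE; rewrite /G' /= inE => /andP[/negP nb eG]; apply: nb.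
  rewrite inE eG /=; apply/andP; split; apply/set0Pn; [exists a | exists b].
    by rewrite !inE ae aX.
  by rewrite !inE be bX bV'.
have neq : comp G' x != comp G' y.
  apply/eqP => eq; have : y \in comp G' x by rewrite eq inE connect0 andbT.
  rewrite inE => /andP[_] /(closed_connect closedX); by rewrite xX (negbTE yX).
have geq : g (comp G' x) = g (comp G' y).
  rewrite !gE //; apply: compE; apply: connect1; apply/and3P; split => //.
  apply/existsP; exists f; by rewrite fE xf yf.
rewrite A.
set B := components G'.
have yB : comp G' y \in B by apply: imset_f.
have xB : comp G' x \in B by apply: imset_f.
have -> : g @: B = g @: (B :\ comp G' y).
  apply/setP => C; apply/imsetP/imsetP => [[D DB ->]|[D]].
    case: (eqVneq D (comp G' y)) => [->|nD]; last by exists D; rewrite // !inE nD.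
    exists (comp G' x); rewrite // !inE neq //.
  rewrite inE => /andP[_ DB] ->; by exists D.
apply: (leq_ltn_trans (leq_imset_card _ _)).
by rewrite [#|B|](cardsD1 (comp G' y)) yB.
Qed.

Definition swapn (a c n : nat) := if n == a then c else if n == c then a else n.
Lemma swapnK a c : involutive (swapn a c).
Proof. move=> n; rewrite /swapn; do ! case: eqP; lia. Qed.
Lemma swapn_inj a c : injective (swapn a c).
Proof. exact: inv_inj (@swapnK a c). Qed.
Lemma swapn_lt a c k n : a < k -> c < k -> n < k -> swapn a c n < k.
Proof. by rewrite /swapn; case: (n == a); case: (n == c). Qed.
Lemma swapn_a a c : swapn a c a = c.
Proof. by rewrite /swapn eqxx. Qed.


Lemma matching (bad : nat -> nat -> bool) (S C : seq nat) : uniq S -> uniq C -> size S = size C ->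
  (forall i d1 d2, i \in S -> bad i d1 -> bad i d2 -> d1 = d2) ->
  ~~ has (fun d => all (fun i => bad i d) S) C ->
  exists sg : nat -> nat, (forall i, i \in S -> (sg i \in C) && ~~ bad i (sg i)) /\
    {in S &, injective sg}.
Proof.
elim: S C => [|i S IH] C uS uC sz Hb Hn.
  by exists id; split.
move: uS; rewrite cons_uniq => /andP[iS uS].
suff [c [cC bic Hn']] : exists c, [/\ c \in C, ~~ bad i c &
    ~~ has (fun d => all (fun j => bad j d) S) (rem c C)].
  have [|||sg [H1 H2]] := IH (rem c C) uS (rem_uniq _ uC).
  - by rewrite size_rem // -sz.
  - by move=> j d1 d2 jS; apply: Hb; rewrite inE jS orbT.
  - exact: Hn'.
  exists (fun j => if j == i then c else sg j); split.
    move=> j; rewrite inE; case: eqP => [->|nj] /= ; first by rewrite cC bic.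
    move=> jS; have /andP[a b] := H1 j jS; by rewrite (mem_rem a) b.
  move=> j1 j2; rewrite !inE.
  case: (eqVneq j1 i) => [->|n1]; case: (eqVneq j2 i) => [->|n2] //= j1S j2S.
  - move=> e; have /andP[a _] := H1 j2 j2S; by rewrite -e mem_rem_uniqF in a.
  - move=> e; have /andP[a _] := H1 j1 j1S; by rewrite e mem_rem_uniqF in a.
  - exact: H2.
case: S IH uS iS Hb Hn sz => [|j S'] IH uS iS Hb Hn sz.
  case: C uC Hn sz => [|c [|c' C']] uC Hn sz; try discriminate.
  exists c; split; rewrite /= ?inE ?eqxx //.
  by move: Hn; rewrite /= andbT orbF.
case: (boolP (has (fun d => all (fun j0 => bad j0 d) (j :: S')) C)) => [/hasP[d dC Hd]|hh].
  exists d; split => //.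
    apply: contra Hn => bid; apply/hasP; exists d => //=; by rewrite bid.
  apply/hasP => [[d' dC' Hd']].
  have e : d = d'.
    apply: (Hb j); rewrite ?inE ?eqxx ?orbT //.
    - by move: Hd => /= /andP[].
    - by move: Hd' => /= /andP[].
  by rewrite -e mem_rem_uniqF in dC'.
case: C uC Hn sz hh => [|c1 [|c2 C']] uC Hn sz hh; try discriminate.
have nc : c1 != c2 by move: uC; rewrite /= inE negb_or => /andP[/andP[]].
have [c [cC bic]] : exists c, c \in [:: c1, c2 & C'] /\ ~~ bad i c.
  case: (boolP (bad i c1)) => b1; last by exists c1; rewrite inE eqxx.
  case: (boolP (bad i c2)) => b2; last by exists c2; rewrite !inE eqxx orbT.
  have := Hb i c1 c2; rewrite inE eqxx => /(_ isT b1 b2) e.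
  by rewrite e eqxx in nc.
exists c; split => //.
apply: contra hh => /hasP[d dr Hd]; apply/hasP; exists d => //; exact: mem_rem dr.
Qed.


Section Main.
Variables (T : finType) (k : nat) (G1 G2 : hypergraph T) (et : {set T}) (v : T)
  (s : {set T} -> {set T}).
Hypotheses (k2 : 2 <= k) (hG1 : is_hypergraph G1) (hG2 : is_hypergraph G2)
  (dis : [disjoint hV G1 & hV G2]) (cr1 : critical G1 k) (cr2 : critical G2 k)
  (etE : et \in hE G1) (low : low_vertex G2 k v) (adm : admissible et G2 v s).

Local Notation G := (split_hg G1 et G2 v s).
Local Notation B := (boundary G2 [set v]).
Local Notation psi e := ((e :\ v) :|: s e).

Lemma vV2 : v \in hV G2. Proof. by case: low. Qed.

Lemma V2nV1 x : x \in hV G2 -> (x \in hV G1) = false.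
Proof. exact: disjointFl dis. Qed.

Lemma inB e : (e \in B) = (e \in hE G2) && (v \in e).
Proof.
rewrite /boundary in_set; apply/andP/andP => [[eE /andP[/set0Pn[x xin] _]]|[eE ve]].
  by move: xin; rewrite !inE => /andP[xe /eqP xv]; rewrite -xv.
split => //; have [se ce] := hG2 eE.
have [x [y [xe ye xy]]] : exists x y, [/\ x \in e, y \in e & x != y] by apply/card_gt1P.
apply/andP; split; apply/set0Pn; first by exists v; rewrite !inE ve eqxx.
case: (eqVneq x v) => [xv|xv].
  exists y; rewrite !inE ye (subsetP se _ ye) andbT /=; by rewrite -xv eq_sym.
by exists x; rewrite !inE xe (subsetP se _ xe) xv.
Qed.

Lemma cardB : #|B| = k.
Proof.
case: low => _ <-; rewrite /degree; apply: eq_card => e; by rewrite inB inE.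
Qed.

Lemma etV1 : et \subset hV G1. Proof. by case: (hG1 etE). Qed.

Lemma sB e : e \in B -> s e \subset hV G1 /\ s e != set0.
Proof. move=> /(adm.1 e) [a b]; split => //; exact: subset_trans a etV1. Qed.

Lemma sBet e : e \in B -> s e \subset et.
Proof. by move=> /(adm.1 e) []. Qed.

Lemma exv e : e \in B -> exists2 z, z \in e :\ v & z \in hV G2.
Proof.
rewrite inB => /andP[eE ve]; have [se ce] := hG2 eE.
have [x [y [xe ye xy]]] : exists x y, [/\ x \in e, y \in e & x != y] by apply/card_gt1P.
case: (eqVneq x v) => [xv|xv].
  exists y; rewrite ?inE ?ye ?(subsetP se _ ye) ?andbT //; by rewrite -xv eq_sym.
by exists x; rewrite ?inE ?xe ?(subsetP se _ xe) ?xv.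
Qed.

Lemma eV2 e : e \in B -> e \subset hV G2.
Proof. by rewrite inB => /andP[/hG2 []]. Qed.

Lemma psiD e : e \in B -> psi e :\: hV G1 = e :\ v.
Proof.
move=> eB; have [sV _] := sB eB; apply/setP => z; rewrite !inE.
case zV1: (z \in hV G1) => /=.
  case ze: (z \in e); rewrite ?andbF //.
  by rewrite V2nV1 ?(subsetP (eV2 eB)) in zV1.
case zs: (z \in s e); last by rewrite orbF.
by rewrite (subsetP sV _ zs) in zV1.
Qed.

Lemma psi_inj : {in B &, injective (fun e => psi e)}.
Proof.
move=> e1 e2 e1B e2B /= eq.
have := psiD e1B; rewrite eq psiD // => eq'.
move: (e1B) (e2B); rewrite !inB => /andP[_ v1] /andP[_ v2].
by rewrite -(setD1K v1) -(setD1K v2) eq'.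
Qed.

Lemma EGP e' : e' \in hE G -> [\/ e' \in hE G1 /\ e' != et,
   e' \in hE G2 /\ v \notin e' | exists2 e, e \in B & e' = psi e].
Proof.
rewrite /= !in_setU in_setD1 in_setD => /orP[/orP[/andP[a b]|/andP[a b]]|/imsetP[e eB ->]].
- by apply: Or31.
- by apply: Or32; split => //; move: a; rewrite inB b /= => /negbTE ->.
- by apply: Or33; exists e.
Qed.

Lemma inG1 e' : e' \in hE G1 -> e' != et -> e' \in hE G.
Proof. by move=> a b; rewrite /= !in_setU in_setD1 a b. Qed.

Lemma inG2 e' : e' \in hE G2 -> v \notin e' -> e' \in hE G.
Proof. by move=> a b; rewrite /= !in_setU in_setD1 in_setD inB a (negbTE b) orbT. Qed.

Lemma inGpsi e : e \in B -> psi e \in hE G.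
Proof. by move=> eB; rewrite /= !in_setU (imset_f (fun e => psi e)) ?orbT. Qed.

Lemma E2sub e' : e' \in hE G2 -> v \notin e' -> e' \subset hV G2 :\ v.
Proof.
move=> eE ve; have [se _] := hG2 eE; apply/subsetP => z ze.
by rewrite !inE (subsetP se _ ze) andbT; apply: contraNneq ve => <-.
Qed.

Lemma hypG : is_hypergraph G.
Proof.
move=> e' /EGP [[eE _]|[eE ve]|[e eB ->]].
- have [se ce] := hG1 eE; split => //; exact: subset_trans se (subsetUl _ _).
- have [se ce] := hG2 eE; split => //.
  exact: subset_trans (E2sub eE ve) (subsetUr _ _).
- have [sV /set0Pn [w ws]] := sB eB; have [z zev zV2] := exv eB.
  split.
    apply/subsetP => x; rewrite /= !inE => /orP[/andP[xv xe]|xs].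
      by rewrite xv (subsetP (eV2 eB) _ xe) orbT.
    by rewrite (subsetP sV _ xs).
  apply/card_gt1P; exists z, w; split; first by rewrite in_setU zev.
    by rewrite in_setU ws orbT.
  apply/eqP => zw; move: (subsetP sV _ ws); by rewrite -zw V2nV1.
Qed.

Lemma bndG : boundary G (hV G1) = [set psi e | e in B].
Proof.
apply/setP => e'; rewrite /boundary in_set; apply/idP/idP.
  move=> /andP[/EGP [[eE _]|[eE ve]|[e eB ->]] /andP[n1 n2]].
  - have [se _] := hG1 eE; case/set0Pn: n2 => x; rewrite !inE => /and3P[xe /negP[]].
    exact: subsetP se _ xe.
  - case/set0Pn: n1 => x; rewrite !inE => /andP[xe xV1].
    have := subsetP (E2sub eE ve) _ xe; rewrite !inE => /andP[_ /V2nV1].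
    by rewrite xV1.
  - exact: imset_f.
move=> /imsetP[e eB ->]; rewrite inGpsi //=.
have [sV /set0Pn [w ws]] := sB eB; have [z zev zV2] := exv eB.
apply/andP; split; apply/set0Pn.
  by exists w; rewrite !inE ws orbT (subsetP sV _ ws).
exists z; rewrite !inE; move: zev; rewrite !inE => /andP[-> ->] /=.
by rewrite V2nV1 // zV2 orbT.
Qed.

Lemma card_bndG : #|boundary G (hV G1)| = k.
Proof. by rewrite bndG card_in_imset ?cardB //; exact: psi_inj. Qed.


Lemma k0 : 0 < k. Proof. exact: leq_trans k2. Qed.

Lemma covered x : x \in hV G -> exists2 e', e' \in hE G & x \in e'.
Proof.
rewrite /= in_setU in_setD1 => /orP[xV1|/andP[xv xV2]].
  have [e1 e1E xe1] := crit_nonisolated cr1 k0 hG1 xV1.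
  case: (eqVneq e1 et) => [eq|ne]; last by exists e1 => //; apply: inG1.
  have : x \in \bigcup_(e in B) s e by rewrite adm.2 -eq.
  move=> /bigcupP[e eB xs].
  by exists (psi e); [apply: inGpsi | rewrite in_setU; apply/orP; right].
have [e2 e2E xe2] := crit_nonisolated cr2 k0 hG2 xV2.
case: (boolP (v \in e2)) => ve; last by exists e2 => //; apply: inG2.
have eB : e2 \in B by rewrite inB e2E ve.
by exists (psi e2); rewrite ?inGpsi // in_setU in_setD1 xv xe2.
Qed.

Lemma lower j : colorable G j -> k < j.
Proof.
move=> [h [Hh He]].
have V1G : forall x, x \in hV G1 -> x \in hV G by move=> x xV; rewrite /= in_setU xV.
case: (boolP [exists x in et, exists y in et, h x != h y]) => [/existsP[x /andP[xe /existsP[y /andP[ye hxy]]]]|nm].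
  apply: (crit_notcol cr1); exists h; split.
    by move=> z /V1G /Hh.
  move=> e eE; case: (eqVneq e et) => [->|ne]; first by exists x, y.
  by apply: He; apply: inG1.
have monoE : forall x y, x \in et -> y \in et -> h x = h y.
  move=> x y xe ye; apply/eqP; apply: contraNT nm => n; apply/existsP; exists x; rewrite xe.
  by apply/existsP; exists y; rewrite ye.
have [x0 [y0 [x0e _ _]]] : exists x y, [/\ x \in et, y \in et & x != y].
  by apply/card_gt1P; case: (hG1 etE).
have x0V : x0 \in hV G1 := subsetP etV1 _ x0e.
apply: (crit_notcol cr2); exists (fun z => if z == v then h x0 else h z); split.
  move=> z zV; case: eqP => [_|/eqP zv]; first exact: Hh (V1G _ x0V).
  by apply: Hh; rewrite /= in_setU in_setD1 zv zV orbT.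
move=> e eE; case: (boolP (v \in e)) => ve; last first.
  have [a [b [ae be hab]]] := He e (inG2 eE ve).
  exists a, b; split => //.
  have -> : (a == v) = false by apply/eqP => av; rewrite -av ae in ve.
  by have -> : (b == v) = false by apply/eqP => bv; rewrite -bv be in ve.
have eB : e \in B by rewrite inB eE ve.
have [a [b [ae be hab]]] := He _ (inGpsi eB).
have cases : forall z, z \in psi e -> (z \in e) && (z != v) \/ h z = h x0.
  move=> z; rewrite in_setU in_setD1 => /orP[/andP[zv ze]|zs].
    by left; rewrite ze zv.
  by right; apply: monoE => //; apply: (subsetP (sBet eB)).
have [/andP[ae' av]|ha] := cases a ae; have [/andP[be' bv]|hb] := cases b be.
- by exists a, b; rewrite (negbTE av) (negbTE bv).
- by exists a, v; rewrite (negbTE av) eqxx -hb.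
- by exists v, b; rewrite (negbTE bv) eqxx -ha.
- by rewrite ha hb eqxx in hab.
Qed.


Lemma colorBC e0 f : e0 \in hE G2 ->
  (f = e0 /\ v \notin e0) \/ (e0 \in B /\ f = psi e0) -> colorable (del_edge G f) k.
Proof.
move=> e0E Hf.
have [g2 [Hg2 He2]] := crit_col cr2 (del_edge_proper hG2 e0E).
have [g1 [Hg1 He1]] := crit_col cr1 (del_edge_proper hG1 etE).
case: (boolP [exists x in et, exists y in et, g1 x != g1 y]) => [/existsP[x /andP[xe /existsP[y /andP[ye hxy]]]]|nm].
  suff : k < k by rewrite ltnn.
  apply: (crit_notcol cr1); exists g1; split => // e eE.
  case: (eqVneq e et) => [->|ne]; first by exists x, y.
  by apply: He1; rewrite /= in_setD1 ne eE.
have monoE : forall x y, x \in et -> y \in et -> g1 x = g1 y.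
  move=> x y xe ye; apply/eqP; apply: contraNT nm => n; apply/existsP; exists x; rewrite xe.
  by apply/existsP; exists y; rewrite ye.
have [x0 [y0 [x0e _ _]]] : exists x y, [/\ x \in et, y \in et & x != y].
  by apply/card_gt1P; case: (hG1 etE).
have x0V : x0 \in hV G1 := subsetP etV1 _ x0e.
set a := g1 x0; set c := g2 v.
have altk : a < k by apply: Hg1.
have cltk : c < k by apply: Hg2; exact: vV2.
pose h z := if z \in hV G1 then swapn a c (g1 z) else g2 z.
have hV1 : forall z, z \in hV G1 -> h z = swapn a c (g1 z) by move=> z zV; rewrite /h zV.
have hV2 : forall z, z \in hV G2 -> h z = g2 z by move=> z zV; rewrite /h V2nV1.
exists h; split.
  move=> z; rewrite /= in_setU in_setD1 => /orP[zV|/andP[_ zV]].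
    by rewrite hV1 // swapn_lt // Hg1.
  by rewrite hV2 // Hg2.
move=> e'; rewrite /= in_setD1 => /andP[ne' e'G].
have [[eE ne]|[eE ve]|[e eB ee']] := EGP e'G.
- have [x [y [xe ye hxy]]] : exists x y, [/\ x \in e', y \in e' & g1 x != g1 y].
    by apply: He1; rewrite /= in_setD1 ne eE.
  have [se _] := hG1 eE.
  exists x, y; split => //; rewrite !hV1 ?(subsetP se) //.
  by apply: contra hxy => /eqP /swapn_inj ->.
- have ne0 : e' != e0.
    case: Hf => [[fe _]|[e0B _]]; first by rewrite -fe.
    apply: contraNneq ve => ->.
    by move: e0B; rewrite inB => /andP[].
  have [x [y [xe ye hxy]]] : exists x y, [/\ x \in e', y \in e' & g2 x != g2 y].
    by apply: He2; rewrite /= in_setD1 ne0 eE.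
  have [se _] := hG2 eE.
  by exists x, y; split => //; rewrite !hV2 ?(subsetP se).
- have ne0 : e != e0.
    case: Hf => [[_ ve0]|[_ fe]].
      by apply: contraNneq ve0 => <-; move: eB; rewrite inB => /andP[].
    by apply: contraNneq ne' => eq; rewrite ee' fe eq.
  have eE : e \in hE G2 by move: (eB); rewrite inB => /andP[].
  have [x [y [xe ye hxy]]] : exists x y, [/\ x \in e, y \in e & g2 x != g2 y].
    by apply: He2; rewrite /= in_setD1 ne0 eE.
  have [sV /set0Pn [w ws]] := sB eB.
  have [se _] := hG2 eE.
  pose m z := if z == v then w else z.
  have mP : forall z, z \in e -> m z \in e' /\ h (m z) = g2 z.
    move=> z ze; rewrite /m ee'; case: (eqVneq z v) => [->|zv].
      split; first by rewrite in_setU ws orbT.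
      rewrite hV1 ?(subsetP sV) //.
      have we : w \in et := subsetP (sBet eB) _ ws.
      by rewrite (monoE w x0 we x0e) swapn_a.
    by rewrite in_setU in_setD1 zv ze hV2 // (subsetP se).
  have [mx hx] := mP x xe; have [my hy] := mP y ye.
  by exists (m x), (m y); rewrite hx hy.
Qed.


Lemma colorA f : f \in hE G1 -> f != et -> colorable (del_edge G f) k.
Proof.
move=> fE fne.
have [g1 [Hg1 He1]] := crit_col cr1 (del_edge_proper hG1 fE).
have [x1 [y1 [x1e y1e hxy1]]] : exists x y, [/\ x \in et, y \in et & g1 x != g1 y].
  by apply: He1; rewrite /= in_setD1 eq_sym fne etE.
pose G2v := Hypergraph (hV G2 :\ v) (hE G2 :\: B).
have pG2v : proper_subhypergraph G2v G2.
  split; [split; [|split]|].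
  - move=> e; rewrite /= in_setD inB => /andP[nb eE]; split; last by case: (hG2 eE).
    by apply: E2sub => //; move: nb; rewrite eE.
  - exact: subsetDl.
  - exact: subsetDl.
  - move=> eq; have : v \in hV G2v by rewrite eq vV2.
    by rewrite /= !inE eqxx.
have [g2 [Hg2 He2]] := crit_col cr2 pG2v.
have exB : forall c, c < k -> [exists e in B, [forall z in e :\ v, g2 z == c]].
  move=> c ck; apply: contraT => nex; suff : k < k by rewrite ltnn.
  apply: (crit_notcol cr2); exists (fun z => if z == v then c else g2 z); split.
    move=> z zV; case: eqP => [//|/eqP zv]; apply: Hg2; by rewrite /= in_setD1 zv zV.
  move=> e eE; case: (boolP (v \in e)) => ve.
    have eB : e \in B by rewrite inB eE ve.
    have : ~~ [forall z in e :\ v, g2 z == c].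
      apply: contra nex => H; apply/existsP; exists e; by rewrite eB.
    move=> /forall_inPn [z zev /= nz]; exists z, v; rewrite eqxx.
    move: zev; rewrite in_setD1 => /andP[zv ze]; by rewrite ze (negbTE zv).
  have [x [y [xe ye hxy]]] : exists x y, [/\ x \in e, y \in e & g2 x != g2 y].
    by apply: He2; rewrite /= in_setD inB eE ve.
  exists x, y; split => //.
  have -> : (x == v) = false by apply/eqP => xv; rewrite -xv xe in ve.
  by have -> : (y == v) = false by apply/eqP => yv; rewrite -yv ye in ve.
pose ec c := odflt set0 [pick e in B | [forall z in e :\ v, g2 z == c]].
have ecP : forall c, c < k -> ec c \in B /\ forall z, z \in ec c :\ v -> g2 z = c.
  move=> c ck; rewrite /ec; case: pickP => [e /andP[eB /forall_inP H]|none] /=.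
    by split => // z /H /eqP.
  move: (exB c ck) => /existsP[e /andP[eB H]].
  by move: (none e); rewrite eB H.
have monoc : forall e c c', e \in B -> (forall z, z \in e :\ v -> g2 z = c) ->
    (forall z, z \in e :\ v -> g2 z = c') -> c = c'.
  move=> e c c' eB H H'; have [z zev _] := exv eB; by rewrite -(H z zev) (H' z zev).
have ec_inj : forall c c', c < k -> c' < k -> ec c = ec c' -> c = c'.
  move=> c c' ck ck' eq; have [eB H] := ecP c ck; have [_ H'] := ecP c' ck'.
  by apply: (monoc (ec c)) => // z; rewrite eq; apply: H'.
have allB : forall e, e \in B -> exists2 c, c < k & e = ec c.
  pose I := [set ec (nat_of_ord i) | i in 'I_k].
  have cI : #|I| = #|B|.
    rewrite cardB card_imset ?card_ord //.
    move=> i j /ec_inj eq; apply: val_inj; exact: eq.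
  have sI : I \subset B.
    by apply/subsetP => e /imsetP[i _ ->]; case: (ecP i (ltn_ord i)).
  move=> e eB; have := (subset_cardP cI sI) e; rewrite eB => /imsetP[i _ ->].
  by exists i.
pose bad c d := [forall x in s (ec c), g1 x == d].
have [sg [H1 H2]] : exists sg : nat -> nat,
    (forall i, i \in iota 0 k -> (sg i \in iota 0 k) && ~~ bad i (sg i)) /\
    {in iota 0 k &, injective sg}.
  apply: matching; rewrite ?iota_uniq //.
    move=> i d1 d2; rewrite mem_iota add0n => /= ik.
    have [eB _] := ecP i ik; have [_ /set0Pn [w ws]] := sB eB.
    move=> /forall_inP /(_ w ws) /eqP <- /forall_inP /(_ w ws) /eqP //.
  apply/hasP => [[d _ /allP Hd]].
  have allet : forall x, x \in et -> g1 x = d.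
    move=> x; rewrite -adm.2 => /bigcupP [e eB xs].
    have [c ck ee] := allB e eB.
    have := Hd c; rewrite mem_iota add0n ck => /(_ isT) /forall_inP /(_ x).
    by rewrite -ee => /(_ xs) /eqP.
  by rewrite (allet x1 x1e) (allet y1 y1e) eqxx in hxy1.
have sglt : forall c, c < k -> sg c < k.
  move=> c ck; have := H1 c; rewrite !mem_iota !add0n ck => /(_ isT) /andP[/andP[_ ->] _] //.
have sginj : forall c c', c < k -> c' < k -> sg c = sg c' -> c = c'.
  by move=> c c' ck ck'; apply: H2; rewrite mem_iota add0n.
pose h z := if z \in hV G1 then g1 z else sg (g2 z).
have hV1 : forall z, z \in hV G1 -> h z = g1 z by move=> z zV; rewrite /h zV.
have hV2 : forall z, z \in hV G2 -> h z = sg (g2 z) by move=> z zV; rewrite /h V2nV1.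
have g2lt : forall z, z \in hV G2 -> z != v -> g2 z < k.
  by move=> z zV zv; apply: Hg2; rewrite /= in_setD1 zv zV.
exists h; split.
  move=> z; rewrite /= in_setU in_setD1 => /orP[zV|/andP[zv zV]].
    by rewrite hV1 // Hg1.
  by rewrite hV2 // sglt // g2lt.
move=> e'; rewrite /= in_setD1 => /andP[ne' e'G].
have [[eE ne]|[eE ve]|[e eB ee']] := EGP e'G.
- have [x [y [xe ye hxy]]] : exists x y, [/\ x \in e', y \in e' & g1 x != g1 y].
    by apply: He1; rewrite /= in_setD1 ne' eE.
  have [se _] := hG1 eE.
  by exists x, y; split => //; rewrite !hV1 ?(subsetP se).
- have [x [y [xe ye hxy]]] : exists x y, [/\ x \in e', y \in e' & g2 x != g2 y].
    by apply: He2; rewrite /= in_setD inB eE (negbTE ve).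
  have se := E2sub eE ve.
  have := subsetP se x xe; rewrite in_setD1 => /andP[xv xV].
  have := subsetP se y ye; rewrite in_setD1 => /andP[yv yV].
  exists x, y; split => //; rewrite !hV2 //.
  by apply: contra hxy => /eqP /sginj -> //; apply: g2lt.
- have eV := eV2 eB.
  case: (boolP [exists y in e :\ v, exists z in e :\ v, g2 y != g2 z]) =>
    [/existsP[y /andP[yev /existsP[z /andP[zev hyz]]]]|nm].
    move: (yev) (zev); rewrite !in_setD1 => /andP[yv ye] /andP[zv ze].
    exists y, z; rewrite ee' !in_setU yev zev !hV2 ?(subsetP eV) //; split => //.
    by apply: contra hyz => /eqP /sginj -> //; apply: g2lt => //; apply: (subsetP eV).
  have [z0 z0ev z0V] := exv eB.
  have z0v : z0 != v by move: z0ev; rewrite in_setD1 => /andP[].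
  set c := g2 z0.
  have ck : c < k by apply: g2lt.
  have monoE : forall z, z \in e :\ v -> g2 z = c.
    move=> z zev; apply/eqP; rewrite eq_sym; apply: contraNT nm => n; apply/existsP; exists z0.
    by rewrite z0ev; apply/existsP; exists z; rewrite zev.
  have [c' ck' ee] := allB e eB.
  have cc' : c = c'.
    apply: (monoc e) => //; move=> z; rewrite ee; exact: (ecP c' ck').2.
  have := H1 c; rewrite mem_iota add0n ck => /(_ isT) /andP[_ /forall_inPn [x xs /= hx]].
  rewrite cc' -ee in xs.
  have [sV _] := sB eB.
  exists x, z0; rewrite ee' !in_setU xs z0ev orbT hV1 ?(subsetP sV) // hV2 //; split => //.
Qed.


Lemma colorDel f : f \in hE G -> colorable (del_edge G f) k.
Proof.
move=> /EGP [[fE fne]|[fE vf]|[e eB ->]].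
- exact: colorA.
- by apply: (colorBC (e0 := f)) => //; left.
- apply: (colorBC (e0 := e)); last by right.
  by move: eB; rewrite inB => /andP[].
Qed.

Lemma main_result : critical G k /\ separating G (boundary G (hV G1)) /\
  #|boundary G (hV G1)| = k.
Proof.
have Bne : exists e, e \in B by apply/card_gt0P; rewrite cardB k0.
have [e0 e0B] := Bne.
split; last split.
- split.
    split; last by move=> j /lower.
    exact: (add_color hypG (inGpsi e0B) (colorDel (inGpsi e0B))).
  move=> H [[hH [sV sE]] neq].
  have [f fG fH] : exists2 f, f \in hE G & f \notin hE H.
    case: (boolP [exists f in hE G, f \notin hE H]) => [/existsP[f /andP[a b]]|nf].
      by exists f.
    exfalso; apply: neq.
    have EE : hE H = hE G.
      apply/eqP; rewrite eqEsubset sE /=; apply/subsetP => f fG.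
      apply: contraNT nf => n; apply/existsP; exists f; by rewrite fG.
    have VV : hV H = hV G.
      apply/eqP; rewrite eqEsubset sV /=; apply/subsetP => x xV.
      have [e' e'G xe'] := covered xV.
      rewrite -EE in e'G; have [se _] := hH _ e'G; exact: subsetP se _ xe'.
    clear nf; by case: H hH sV sE EE VV => VH EH /= *; subst.
  have cH : colorable H k.
    apply: (col_sub (G := del_edge G f)) => //; last exact: colorDel.
    apply/subsetP => e' e'H; rewrite /= in_setD1 (subsetP sE _ e'H) andbT.
    by apply: contraNneq fH => <-.
  have [j [cj jk]] := chi_exists cH.
  by exists j.
- apply: sep_boundary; first exact: hypG.
  by apply/set0Pn/card_gt0P; rewrite card_bndG k0.
- exact: card_bndG.
Qed.

End Main.

Unset Implicit Arguments.
Theorem theorem15 (T : finType) (k : nat) (G1 G2 : hypergraph T)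
    (et : {set T}) (v : T) (s : {set T} -> {set T}) :
  2 <= k ->
  is_hypergraph G1 -> is_hypergraph G2 ->
  [disjoint hV G1 & hV G2] ->
  critical G1 k -> critical G2 k ->
  et \in hE G1 ->
  low_vertex G2 k v ->
  admissible et G2 v s ->
  critical (split_hg G1 et G2 v s) k /\
  separating (split_hg G1 et G2 v s) (boundary (split_hg G1 et G2 v s) (hV G1)) /\
  #|boundary (split_hg G1 et G2 v s) (hV G1)| = k.
Proof. by move=> *; apply: main_result. Qed.
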